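(* Let $X$ be a correlator of type $X_{-1}$ and let $W_1=x_1^{a_1}x_2+x_2^{a_2}x_3+\dots+x_N^{a_N}$ be a chain summand with $K_{W_1}=1$. Then $K_N\le\ell_N$. If moreover $K_N\ge0$, then the sequence $\mathbf K=(K_1,\dots,K_N)$ is either a concatenation of blocks $(0)$ and $(-1,1)$ followed by a final entry $1$, or a concatenation of blocks $(0)$ and $(-1,1)$ together with exactly one block among $(-1,2)$, $(-2,3)$, $(1)$, followed by a final entry $0$.
   Context: $W=\bigoplus_jW_j$ is an invertible polynomial written as a disjoint sum of atomic summands (variables relabeled within each summand), $E_W$ its exponent matrix, $K_{W_1}=\sum_{i\in W_1}K_i$. A genus-zero correlator (B-model of $W^T$, or A-model of $(W,G_W)$ via Krawitz's map) is of type $X_{-1}$ if it has at least four insertions, has the form $\langle x_N,\dots,x_N,\dots,x_1,\dots,x_1,\alpha,\beta\rangle$ with $x_i$ appearing $\ell_i\ge0$ times and $\alpha=\prod x_i^{m_i}$, $\beta=\prod x_i^{n_i}$ monomials of the standard basis of $\mathrm{Jac}(W^T)$, and, with $b=E_W^{-1}(\ell+m+n+2\cdot\mathbf 1)$ and $K_i=\ell_i-b_i+1$, satisfies $K_i\in\mathbb Z$ and $\sum_iK_i=1$. For a chain summand, the standard basis of its transpose $x_1^{a_1}+x_1x_2^{a_2}+\dots+x_{N-1}x_N^{a_N}$ consists of $\prod x_i^{r_i}$ with $r_i\le a_i-1$ excluding $r_N=a_N-1,r_{N-1}=0,\dots,r_{N-2l}=a_{N-2l}-1,r_{N-2l-1}\ge1$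 ($l\ge0$). *)

(* Defs.v *)
From HB Require Import structures.
From mathcomp Require Import all_boot all_order all_algebra.
Set Implicit Arguments. Unset Strict Implicit. Unset Printing Implicit Defensive.
Import Order.TTheory GRing.Theory Num.Theory.

(* Atomic summands of an invertible polynomial (0-indexed variables). *)
(*  Fermat a      :  x_1^a                                             *)
(*  Chain [a_1..a_N] : x_1^{a_1}x_2 + ... + x_{N-1}^{a_{N-1}}x_N + x_N^{a_N} *)
(*  Loop  [a_1..a_N] : x_1^{a_1}x_2 + ... + x_N^{a_N}x_1               *)
Inductive atomic := Fermat of nat | Chain of seq nat | Loop of seq nat.

Definition asize (A : atomic) : nat :=
  match A with Fermat _ => 1 | Chain s => size s | Loop s => size s end.

Definition atomic_wf (A : atomic) : bool :=
  match A with
  | Fermat a => 2 <= a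
  | Chain s => (1 <= size s) && all (fun a => 2 <= a) s
  | Loop s => (2 <= size s) && all (fun a => 2 <= a) s
  end.

(* Entry (row = monomial i, column = variable j) of the exponent matrix
   of an atomic summand. *)
Definition loc_ent (A : atomic) (i j : nat) : nat :=
  match A with
  | Fermat a => if (i == 0) && (j == 0) then a else 0
  | Chain s => if (i < size s) && (j < size s) then
                 (if j == i then nth 0 s i else if j == i.+1 then 1 else 0)
               else 0
  | Loop s => if (i < size s) && (j < size s) then
                (if j == i then nth 0 s i
                 else if j == i.+1 %% size s then 1 else 0)
              else 0
  end.

(* Entries of the (block diagonal) exponent matrix E_W of W = (+)_j W_j. *)
Fixpoint Eent (ws : seq atomic) (i j : nat) : nat :=
  match ws with
  | [::] => 0
  | A :: ws' =>
      let k := asize A in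
      if (i < k) && (j < k) then loc_ent A i j
      else if (k <= i) && (k <= j) then Eent ws' (i - k) (j - k)
      else 0
  end.

Definition nvars (ws : seq atomic) : nat := sumn (map asize ws).

(* Standard basis of Jac(A^T), on local exponent vectors r (0-indexed). *)
(* Chain transpose x_1^{a_1}+x_1x_2^{a_2}+...+x_{N-1}x_N^{a_N}: r_i <= a_i - 1,
   excluding (1-indexed) r_N=a_N-1, r_{N-1}=0, ..., r_{N-2l}=a_{N-2l}-1,
   r_{N-2l-1}>=1 (l>=0), the last condition being void when N-2l-1 = 0. *)
Definition chain_excluded (s : seq nat) (r : nat -> nat) (l : nat) : bool :=
  let N := size s in
  [&& 2 * l < N,
      all (fun k => r (N - 2 * k).-1 == (nth 0 s (N - 2 * k).-1).-1) (iota 0 l.+1),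
      all (fun k => r (N - 2 * k - 1).-1 == 0) (iota 0 l)
    & (N - 2 * l - 1 == 0) || (1 <= r (N - 2 * l - 1).-1)].

Definition loc_basis (A : atomic) (r : nat -> nat) : bool :=
  match A with
  | Fermat a => r 0 <= a - 2
  | Chain s => all (fun i => r i <= (nth 0 s i).-1) (iota 0 (size s)) &&
               ~~ has (chain_excluded s r) (iota 0 (size s))
  | Loop s => all (fun i => r i <= (nth 0 s i).-1) (iota 0 (size s))
  end.

(* r : exponent vector of a monomial in all variables of W^T. *)
Fixpoint in_std_basis (ws : seq atomic) (r : nat -> nat) : bool :=
  match ws with
  | [::] => true
  | A :: ws' => loc_basis A r && in_std_basis ws' (fun i => r (i + asize A))
  end.

Local Open Scope ring_scope.

Definition EW (ws : seq atomic) : 'M[rat]_(nvars ws) :=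
  \matrix_(i, j) (Eent ws i j)%:R.

Definition bvec (ws : seq atomic) (l m n : nat -> nat) (i : nat) : rat :=
  let v : 'cV[rat]_(nvars ws) := \col_k (l k + m k + n k + 2)%N%:R in
  match @insub _ (fun k => (k < nvars ws)%N) _ i with
  | Some i' => (invmx (EW ws) *m v) i' ord0
  | None => 0
  end.

Definition Kvec (ws : seq atomic) (l m n : nat -> nat) (i : nat) : rat :=
  (l i)%:R - bvec ws l m n i + 1.

Definition is_integer (x : rat) : Prop := exists z : int, x = z%:~R.

(* Correlator <x_N..x_N,...,x_1..x_1, alpha, beta> of type X_{-1};
   x_i appears l i times, alpha = prod x_i^{m i}, beta = prod x_i^{n i}. *)
Definition type_Xm1 (ws : seq atomic) (l m n : nat -> nat) : Prop :=
  [/\ (4 <= (\sum_(i < nvars ws) l i) + 2)%N,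
      in_std_basis ws m, in_std_basis ws n,
      forall i, (i < nvars ws)%N -> is_integer (Kvec ws l m n i)
    & \sum_(i < nvars ws) Kvec ws l m n i = 1].

Definition basic_block (s : seq rat) : bool := (s == [:: 0]) || (s == [:: -1; 1]).
Definition special_block (s : seq rat) : bool :=
  [|| s == [:: -1; 2], s == [:: -2; 3] | s == [:: 1]].

Definition K_shape (s : seq rat) : Prop :=
  (exists bs : seq (seq rat), all basic_block bs /\ s = flatten bs ++ [:: 1]) \/
  (exists (bs1 bs2 : seq (seq rat)) (sp : seq rat),
      [/\ all basic_block bs1, all basic_block bs2, special_block sp
        & s = flatten bs1 ++ sp ++ flatten bs2 ++ [:: 0]]).

(* Main.v *)
Require Import Defs.
From HB Require Import structures.
From mathcomp Require Import all_boot all_order all_algebra.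
From mathcomp Require Import zify ring lra.
From Stdlib Require Import FunctionalExtensionality.
Set Implicit Arguments. Unset Strict Implicit. Unset Printing Implicit Defensive.
Import Order.TTheory GRing.Theory Num.Theory.

Lemma loc_off A i : exists c, forall j, j != i -> (loc_ent A i j <= (j == c))%N.
Proof.
case: A => [x|s|s] /=.
- exists 0%N => j hj; case: ifP => // /andP [/eqP hi /eqP hj'].
  by rewrite hi hj' eqxx in hj.
- exists i.+1 => j hj; rewrite (negbTE hj); case: ifP => // _; by case: ifP.
- exists (i.+1 %% size s) => j hj; rewrite (negbTE hj); case: ifP => // _; by case: ifP.
Qed.

Lemma Eent_off ws i : exists c, forall j, j != i -> (Eent ws i j <= (j == c))%N.
Proof.
elim: ws i => [|A ws IH] i /=; first by exists 0%N.
case: (ltnP i (asize A)) => hi.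
  have [c hc] := loc_off A i.
  exists c => j hj /=; case: ifP => hjA //.
  exact: hc.
have [c hc] := IH (i - asize A)%N.
exists (c + asize A)%N => j hj; rewrite /=.
case: (leqP (asize A) j) => hjA //=.
have hne : (j - asize A != i - asize A)%N.
  apply/eqP => e; move/eqP: hj; apply; lia.
apply: (leq_trans (hc _ hne)).
case: eqP => // e; by rewrite -e subnK // eqxx.
Qed.

Lemma nvars_cons A ws : nvars (A :: ws) = (asize A + nvars ws)%N.
Proof. by []. Qed.

Lemma Eent_diag ws i : all atomic_wf ws -> (i < nvars ws)%N -> (2 <= Eent ws i i)%N.
Proof.
elim: ws i => [|A ws IH] i //= /andP [hA hws] hi.
case: (ltnP i (asize A)) => hiA /=.
  case: A hA hiA {hi} => [x|s|s] /= hA hiA.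
  - by move: hiA; rewrite ltnS leqn0 => /eqP ->.
  - rewrite hiA eqxx; case/andP: hA => _ /allP; apply; exact: mem_nth.
  - rewrite hiA eqxx; case/andP: hA => _ /allP; apply; exact: mem_nth.
apply: IH => //; rewrite nvars_cons in hi; lia.
Qed.


Lemma Eent_block ws j A k jj : (j < size ws)%N -> nth (Fermat 2) ws j = A ->
  (k < asize A)%N ->
  Eent ws (nvars (take j ws) + k) jj =
  if (nvars (take j ws) <= jj)%N && (jj < nvars (take j ws) + asize A)%N
  then loc_ent A k (jj - nvars (take j ws)) else 0%N.
Proof.
elim: ws j jj => [|B ws IH] [|j] jj //= hj.
- move=> <- hk; rewrite /nvars /= add0n hk subn0 /= add0n.
  by case: ifP => //; have -> : (asize B <= k)%N = false by rewrite leqNgt hk.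
- move=> hA hk; rewrite nvars_cons.
  have -> : (asize B + nvars (take j ws) + k < asize B)%N = false by lia.
  have -> : (asize B <= asize B + nvars (take j ws) + k)%N = true by lia.
  case: (leqP (asize B) jj) => hjj /=.
    rewrite (_ : (asize B + nvars (take j ws) + k - asize B = nvars (take j ws) + k)%N); last lia.
    rewrite IH //.
    have -> : (asize B + nvars (take j ws) <= jj)%N = (nvars (take j ws) <= jj - asize B)%N by lia.
    have -> : (jj < asize B + nvars (take j ws) + asize A)%N = (jj - asize B < nvars (take j ws) + asize A)%N by lia.
    by rewrite subnDA.
  by have -> : (asize B + nvars (take j ws) <= jj)%N = false by lia.
Qed.

Lemma nvars_take ws j : (j < size ws)%N ->
  (nvars (take j ws) + asize (nth (Fermat 2) ws j) <= nvars ws)%N.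
Proof.
elim: ws j => [|B ws IH] [|j] //= hj.
  by rewrite /nvars /= add0n leq_addr.
rewrite !nvars_cons -addnA leq_add2l; exact: IH.
Qed.

Local Open Scope ring_scope.

Inductive st := SA | SB | SC | SE | SG | SH | SX.
Definition st_eqb (x y : st) : bool :=
  match x, y with
  | SA, SA | SB, SB | SC, SC | SE, SE | SG, SG | SH, SH | SX, SX => true
  | _, _ => false end.

Lemma st_eqP : Equality.axiom st_eqb.
Proof. by case; case; constructor. Qed.
HB.instance Definition _ := hasDecEq.Build st st_eqP.

Definition dstep (q : st) (k : int) : st :=
  match q with
  | SA => if k == 0 then SA else if k == -1 then SB else if k == -2 then SC
          else if k == 1 then SG else SX
  | SB => if k == 1 then SA else if k == 2 then SE else SX
  | SC => if k == 3 then SE else SX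
  | SE | SG => if k == 0 then SG else if k == -1 then SH else SX
  | SH => if k == 1 then SE else SX
  | SX => SX
  end.

Definition drun (q : st) (w : seq int) : st := foldl dstep q w.

Definition isG q := if q is SG then true else false.

Definition LE (w : seq int) : Prop :=
  exists bs : seq (seq rat), all basic_block bs /\ map intr w = flatten bs ++ [:: 0].

Lemma runX w : isG (drun SX w) = false.
Proof. by elim: w. Qed.

Lemma dfa_E (w : seq int) :
  (isG (drun SE w) -> LE w) /\
  (isG (drun SG w) -> w = [::] \/ LE w) /\
  (isG (drun SH w) -> exists w', w = 1 :: w' /\ LE w').
Proof.
elim: w => [|x w [IE [IG IH]]]; first by do !split => //; left.
have hE : isG (drun SE (x :: w)) -> LE (x :: w).
  rewrite /drun /= -/(drun _ w).
  case: ifP => [/eqP -> /IG [->|[bs [hb hw]]]|_].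
  + by exists [::]; split.
  + by exists ([:: 0] :: bs); rewrite /= hb /= hw.
  case: ifP => [/eqP -> /IH [w' [-> [bs [hb hw]]]]|_]; last by rewrite runX.
  by exists ([:: -1; 1] :: bs); rewrite /= hb /= hw.
split; [exact: hE|split].
- by move=> H; right; apply: hE.
- rewrite /drun /= -/(drun _ w).
  case: ifP => [/eqP -> /IE h|_]; last by rewrite runX.
  by exists w.
Qed.

Lemma KS_cons (blk : seq rat) (w : seq rat) : basic_block blk -> K_shape w -> K_shape (blk ++ w).
Proof.
move=> hb [[bs [hbs ->]]|[bs1 [bs2 [sp [h1 h2 h3 ->]]]]].
- by left; exists (blk :: bs); rewrite /= hb hbs catA.
- right; exists (blk :: bs1), bs2, sp; split => //; first by rewrite /= hb.
  by rewrite /= catA.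
Qed.

Lemma dfa_A (w : seq int) :
  (isG (drun SA w) -> K_shape (map intr w)) /\
  (isG (drun SB w) -> K_shape (map intr ((-1) :: w))) /\
  (isG (drun SC w) -> K_shape (map intr ((-2) :: w))).
Proof.
elim: w => [|x w [IA [IB IC]]]; first by do !split.
split; [|split].
- rewrite /drun /= -/(drun _ w).
  case: ifP => [/eqP -> /IA h|_].
    by rewrite -[_ :: _]/([:: 0%:~R] ++ _); apply: KS_cons.
  case: ifP => [/eqP -> /IB h|_]; first exact: h.
  case: ifP => [/eqP -> /IC h|_]; first exact: h.
  case: ifP => [/eqP -> |_]; last by rewrite runX.
  case/(proj1 (proj2 (dfa_E w))) => [->|[bs [hb hw]]].
    by left; exists [::].
  right; exists [::], bs, [:: 1]; split => //.
  by rewrite /= hw.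
- rewrite /drun /= -/(drun _ w).
  case: ifP => [/eqP -> /IA h|_].
    by rewrite -[_ :: _]/([:: (-1)%:~R; 1%:~R] ++ _); apply: KS_cons.
  case: ifP => [/eqP -> |_]; last by rewrite runX.
  case/(proj1 (dfa_E w)) => bs [hb hw].
  right; exists [::], bs, [:: -1; 2]; split => //.
  by rewrite /= hw.
- rewrite /drun /= -/(drun _ w).
  case: ifP => [/eqP -> |_]; last by rewrite runX.
  case/(proj1 (dfa_E w)) => bs [hb hw].
  right; exists [::], bs, [:: -2; 3]; split => //.
  by rewrite /= hw.
Qed.

Definition Pf (b : int) : int := if 2 <= b then b - 2 else 1 - b.
Definition Cf (b be K : int) : bool :=
  let u := K + b - 1 in
  (0 <= u) && (if 3 <= b then 2 * (b - 2) <= u - be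
               else if b == 2 then 0 <= u - be
               else if b == 1 then true else u - be <= 2 * b - 2).
Definition memst q s := has (st_eqb q) s.
Definition good (b r : int) (q : st) : bool :=
  if (b == -1) && (r == 2) then false
  else if (b == 0) && (r == 1) then memst q [:: SA; SH]
  else if (b == 0) && (r == 2) then memst q [:: SB]
  else if (b == 1) && (r == 1) then memst q [:: SE; SG]
  else if (b == 1) && (r == 2) then memst q [:: SA]
  else if (b == 2) && (r == 1) then memst q [:: SE; SG]
  else if (b == 2) && (r == 2) then memst q [:: SA]
  else if (b == 3) && (r == 0) then memst q [:: SE; SG]
  else if (b == 3) && (r == 1) then memst q [:: SA]
  else if (b == 3) && (r == 2) then false
  else if (b == 4) && (r == 0) then memst q [:: SA]
  else if (b == 4) && (r == 1) then false
  else if (b == 4) && (r == 2) then false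
  else true.
Definition zrange (lo : int) (n : nat) : seq int := [seq lo + k%:Z | k <- iota 0 n].
Definition allst := [:: SA; SB; SC; SE; SG; SH; SX].

Definition chk : bool :=
  all (fun b => all (fun r => all (fun q => good b r q ==>
    all (fun be => all (fun K =>
      let d := K + Pf be - Pf b in
      (Cf b be K && (d <= r)) ==>
      (good be (r - d) (dstep q K) &&
       (((be == 0) && (r - d == 0) && (0 <= K)) ==> isG (dstep q K))))
      (zrange (-3) 8)) (zrange (-6) 11)) allst) (zrange 0 3)) (zrange (-6) 11).

Lemma chk_ok : chk.
Proof. vm_compute. reflexivity. Qed.

Lemma zrange_mem (lo z : int) (n : nat) : lo <= z -> z < lo + n%:Z -> z \in zrange lo n.
Proof.
move=> h1 h2; apply/mapP; exists `|z - lo|%N.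
  rewrite mem_iota add0n.
  have h3 : (`|z - lo|%N : int) = z - lo by rewrite gez0_abs // subr_ge0.
  lia.
rewrite gez0_abs ?subr_ge0 //; ring.
Qed.

Lemma Cf_delta b be K : Cf b be K -> Pf b <= K + Pf be.
Proof.
rewrite /Cf /Pf; case/andP=> h1.
repeat case: ifP; lia.
Qed.

Lemma Cf_bounds b be K : -6 <= b -> b <= 4 -> Cf b be K -> K + Pf be - Pf b <= 2 ->
  -6 <= be /\ be <= 4 /\ -3 <= K /\ K <= 4.
Proof.
rewrite /Cf /Pf => hb1 hb2; case/andP=> h1.
repeat case: ifP; lia.
Qed.

Lemma Cf_of (a s l b be : int) : 2 <= a -> 0 <= s -> s <= 2 * a - 2 -> 0 <= l ->
  a * b + be = l + s + 2 -> Cf b be (l + 1 - b).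
Proof.
move=> ha hs1 hs2 hl he; rewrite /Cf.
apply/andP; split; first lia.
case: ifP => h3.
  have : 2 * (b - 2) <= a * (b - 2) by nia.
  lia.
case: ifP => h2; first lia.
case: ifP => // h1.
have : a * b <= 2 * b by nia.
lia.
Qed.

Lemma chk_step (b r : int) (q : st) (be K : int) : -6 <= b -> b <= 4 -> 0 <= r -> r <= 2 -> Cf b be K ->
  0 <= r - (K + Pf be - Pf b) -> good b r q ->
  good be (r - (K + Pf be - Pf b)) (dstep q K) /\
  (be = 0 -> r - (K + Pf be - Pf b) = 0 -> 0 <= K -> isG (dstep q K)).
Proof.
move=> hb1 hb2 hr1 hr2 hC hd hg.
have hd0 := Cf_delta hC.
have [hbe1 [hbe2 [hK1 hK2]]] : -6 <= be /\ be <= 4 /\ -3 <= K /\ K <= 4.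
  apply: Cf_bounds hC _ => //; lia.
have Hb : b \in zrange (-6) 11 by apply: zrange_mem; lia.
have Hr : r \in zrange 0 3 by apply: zrange_mem; lia.
have Hbe : be \in zrange (-6) 11 by apply: zrange_mem; lia.
have HK : K \in zrange (-3) 8 by apply: zrange_mem; lia.
have Hq : q \in allst by case: q {hg}.
have := chk_ok; rewrite /chk => /allP/(_ b Hb)/allP/(_ r Hr)/allP/(_ q Hq)/implyP/(_ hg).
move=> /allP/(_ be Hbe)/allP/(_ K HK) /= /implyP.
rewrite hC /=.
have -> : (K + Pf be - Pf b <= r) by lia.
move=> /(_ isT) /andP[h1 h2]; split => // hbe hr hK.
move/implyP: h2; apply; rewrite hr hbe hK !eqxx //=.
Qed.


Lemma start_ok : all (fun b => good b (2 - Pf b) SA) (zrange (-1) 6).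
Proof. by vm_compute. Qed.

Section Main.
Variables (N : nat) (a l s b : nat -> int).
Definition BB k := if (k < N)%N then b k else 0.
Definition Kf k := l k + 1 - b k.
Definition Ssum i := \sum_(i <= k < N) Kf k.
Hypothesis hN : (0 < N)%N.
Hypothesis hk : forall k, (k < N)%N -> 2 <= a k /\ 0 <= l k /\ 0 <= s k /\
   s k <= 2 * a k - 2 /\ a k * b k + BB k.+1 = l k + s k + 2.
Hypothesis hsum : \sum_(k < N) Kf k = 1.
Hypothesis hlast : 0 <= Kf N.-1.

Lemma Cf_k k : (k < N)%N -> Cf (BB k) (BB k.+1) (Kf k).
Proof.
move=> hkN; have [h1 [h2 [h3 [h4 h5]]]] := hk hkN.
rewrite /BB hkN /Kf; apply: (Cf_of h1 h3 h4 h2); rewrite -/(BB _); exact: h5.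
Qed.

Lemma Ssum_S i : (i < N)%N -> Ssum i = Kf i + Ssum i.+1.
Proof. by move=> h; rewrite /Ssum big_ltn. Qed.

Lemma lower i : (i <= N)%N -> Pf (BB i) - 1 <= Ssum i.
Proof.
move=> hi.
suff H : forall d, (d <= N)%N -> Pf (BB (N - d)) - 1 <= Ssum (N - d).
  by have := H (N - i)%N (leq_subr _ _); rewrite subKn.
elim=> [|d IH] hd.
  by rewrite subn0 /Ssum big_geq // /BB ltnn /Pf.
have e : (N - d = (N - d.+1).+1)%N by rewrite subnSK.
have hlt : (N - d.+1 < N)%N by rewrite ltn_subrL hN.
have := IH (ltnW hd); rewrite e => IH'.
rewrite Ssum_S //.
have := Cf_delta (Cf_k hlt).
move: IH'; set x := Pf _; set y := Pf _; set z := Ssum _; set w := Kf _.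
lia.
Qed.
Definition rr i := Ssum i - Pf (BB i) + 1.

Lemma rr_ge0 i : (i <= N)%N -> 0 <= rr i.
Proof. move=> h; have := lower h; rewrite /rr; set x := Pf _; set y := Ssum _; lia. Qed.

Lemma rr_S i : (i < N)%N -> rr i.+1 = rr i - (Kf i + Pf (BB i.+1) - Pf (BB i)).
Proof. by move=> h; rewrite /rr (Ssum_S h); ring. Qed.

Lemma run_S i : drun SA [seq Kf k | k <- iota 0 i.+1] =
  dstep (drun SA [seq Kf k | k <- iota 0 i]) (Kf i).
Proof. by rewrite -addn1 iotaD map_cat /drun foldl_cat. Qed.

Lemma fwd i : (i < N)%N -> -6 <= BB i /\ BB i <= 4 /\ rr i <= 2 /\
  good (BB i) (rr i) (drun SA [seq Kf k | k <- iota 0 i]).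
Proof.
elim: i => [|i IH] hi.
  have h0 : Ssum 0 = 1 by rewrite /Ssum big_mkord.
  have hl := rr_ge0 (ltnW hi).
  have e : rr 0 = 2 - Pf (BB 0) by rewrite /rr h0; ring.
  rewrite e in hl *.
  have hb : BB 0 \in zrange (-1) 6.
    apply: zrange_mem; move: hl; rewrite /Pf; case: ifP; lia.
  have := allP start_ok _ hb => /= hg.
  have hP : 0 <= Pf (BB 0) by rewrite /Pf; case: ifP; lia.
  split; last split; last split => //.
    by move: hl; rewrite /Pf; case: ifP; lia.
  by move: hl; rewrite /Pf; case: ifP; lia.
  lia.
have [h1 [h2 [h3 h4]]] := IH (ltnW hi).
have hC := Cf_k (ltnW hi).
have hrr := rr_S (ltnW hi).
have g0 := rr_ge0 (ltnW (ltnW hi)).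
have g1 := rr_ge0 (ltnW hi).
rewrite hrr in g1.
have [c1 _] := chk_step h1 h2 g0 h3 hC g1 h4.
have hb := Cf_bounds h1 h2 hC.
have hd0 : 0 <= Kf i + Pf (BB i.+1) - Pf (BB i).
  have := Cf_delta hC; set x := Pf _; set y := Pf _; set z := Kf _; lia.
move: hb g1 h3 hrr hd0; set d := (Kf i + _ - _); move=> hb g1 h3 hrr hd0.
have [hb1 [hb2 _]] : -6 <= BB i.+1 /\ BB i.+1 <= 4 /\ True.
  have : d <= 2 by lia.
  by move/hb => [? [? _]].
rewrite hrr run_S; split => //; split => //; split => //; lia.
Qed.

Lemma main_int : isG (drun SA [seq Kf k | k <- iota 0 N]).
Proof.
have hi : (N.-1 < N)%N by rewrite prednK // ltnSn.
have eN : N.-1.+1 = N by rewrite prednK.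
have [h1 [h2 [h3 h4]]] := fwd hi.
have hC := Cf_k hi.
have hrr := rr_S hi.
have g0 := rr_ge0 (ltnW hi).
have g1 := rr_ge0 (leqnn N).
rewrite -{1}eN hrr in g1.
have [_ c2] := chk_step h1 h2 g0 h3 hC g1 h4.
rewrite -eN run_S; apply: c2 => //.
  by rewrite eN /BB ltnn.
  rewrite -hrr eN /rr /Ssum big_geq // /BB ltnn /Pf /=. done.
Qed.
End Main.

Lemma EW_unit ws : all atomic_wf ws -> EW ws \in unitmx.
Proof.
move=> hwf; rewrite -unitmx_tr -row_free_unit; apply: inj_row_free => v hv.
apply/rowP => jj.
pose F := fun i : 'I_(nvars ws) => (`|v 0 i| : rat).
case: (@arg_maxP _ _ _ jj xpredT F isT) => i0 _ Hmax.
have hrow : \sum_j v 0 j * (Eent ws i0 j)%:R = 0.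
  have := congr1 (fun M : 'M[rat]_(1, nvars ws) => M ord0 i0) hv; rewrite !mxE => e; rewrite -[X in _ = X]e.
  by apply: eq_bigr => j _; rewrite !mxE.
have hd := Eent_diag hwf (ltn_ord i0).
have [c hc] := Eent_off ws i0.
rewrite (bigD1 i0) //= in hrow.
have key : `|v 0 i0| * (Eent ws i0 i0)%:R <= `|v 0 i0|.
  have e : v 0 i0 * (Eent ws i0 i0)%:R = - \sum_(j | j != i0) v 0 j * (Eent ws i0 j)%:R.
    by apply/eqP; rewrite -addr_eq0 hrow.
  have -> : `|v 0 i0| * (Eent ws i0 i0)%:R = `|v 0 i0 * (Eent ws i0 i0)%:R|.
    by rewrite normrM normr_nat.
  rewrite e normrN.
  case: (ltnP c (nvars ws)) => hcn; last first.
    rewrite big1 ?normr0 // => j hj.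
    have := hc j hj; have -> : (j == c :> nat) = false by apply/eqP => e'; move: (ltn_ord j); lia.
    by rewrite leqn0 => /eqP ->; rewrite mulr0.
  case: (eqVneq (Ordinal hcn) i0) => hci.
    rewrite big1 ?normr0 // => j hj.
    have := hc j hj; have -> : (j == c :> nat) = false.
      by apply/eqP => e'; move/eqP: hj; apply; apply: val_inj; rewrite -hci /= e'.
    by rewrite leqn0 => /eqP ->; rewrite mulr0.
  rewrite (bigD1 (Ordinal hcn)) //= big1 ?addr0; last first.
    move=> j /andP [hj1 hj2].
    have := hc j hj1; have -> : (j == c :> nat) = false.
      by apply/eqP => e'; move/eqP: hj2; apply; apply: val_inj; rewrite /= e'.
    by rewrite leqn0 => /eqP ->; rewrite mulr0.
  have h1 := hc (Ordinal hcn) hci; rewrite /= eqxx in h1.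
  rewrite normrM normr_nat.
  have hm := Hmax (Ordinal hcn) isT; rewrite /F in hm.
  case: (Eent ws i0 c) h1 => [|[|]] // _; rewrite ?mulr0 ?mulr1 //.
have h0 : `|v 0 i0| = 0.
  apply/eqP; rewrite eq_le normr_ge0 andbT.
  have h2 : 2%:R <= (Eent ws i0 i0)%:R :> rat by rewrite ler_nat.
  have hp := normr_ge0 (v 0 i0).
  nra.
rewrite mxE; apply/eqP; rewrite -normr_eq0 eq_le normr_ge0 andbT.
by rewrite -h0; apply: Hmax.
Qed.

Lemma bvec_ord ws l m n (j : 'I_(nvars ws)) :
  bvec ws l m n j = (invmx (EW ws) *m (\col_k (l k + m k + n k + 2)%N%:R)) j ord0.
Proof.
by rewrite /bvec valK.
Qed.

Lemma bvec_row ws l m n i : all atomic_wf ws -> (i < nvars ws)%N ->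
  \sum_(j < nvars ws) (Eent ws i j)%:R * bvec ws l m n j = (l i + m i + n i + 2)%N%:R.
Proof.
move=> hwf hi.
have := congr1 (fun M : 'cV[rat]_(nvars ws) => M (Ordinal hi) ord0)
  (mulKVmx (EW_unit hwf) (\col_k (l k + m k + n k + 2)%N%:R)).
rewrite !mxE /= => <-; apply: eq_bigr => j _.
by rewrite bvec_ord !mxE.
Qed.

Lemma sum_pick nv p (G : nat -> rat) :
  \sum_(j < nv) ((j == p :> nat))%:R * G j = if (p < nv)%N then G p else 0.
Proof.
case: ltnP => hp.
  rewrite (bigD1 (Ordinal hp)) //= eqxx mul1r big1 ?addr0 // => j hj.
  have -> : (j == p :> nat) = false.
    by apply/eqP => e; move/eqP: hj; apply; apply: val_inj.
  by rewrite mul0r.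
rewrite big1 // => j _; have -> : (j == p :> nat) = false.
  by apply/eqP => e; move: (ltn_ord j); rewrite e; lia.
by rewrite mul0r.
Qed.

Lemma Eent_chain_pt ws j as_ k jj : (j < size ws)%N -> nth (Fermat 2) ws j = Chain as_ ->
  (k < size as_)%N ->
  Eent ws (nvars (take j ws) + k) jj =
  if jj == (nvars (take j ws) + k)%N then nth 0%N as_ k
  else if (jj == (nvars (take j ws) + k.+1)%N) && (k.+1 < size as_)%N then 1%N else 0%N.
Proof.
move=> hj hn hk; rewrite (Eent_block jj hj hn) //=.
set o := nvars (take j ws).
case: (leqP o jj) => h1 /=; last first.
  have -> : (jj == o + k)%N = false by lia.
  have -> : (jj == o + k.+1)%N = false by lia.
  by [].
case: (ltnP jj (o + size as_)) => h2 /=; last first.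
  have -> : (jj == o + k)%N = false by lia.
  by case: (jj =P (o + k.+1)%N) => //= e; case: ltnP => //; lia.
rewrite hk (_ : (jj - o < size as_)%N) /=; last by lia.
have -> : ((jj - o)%N == k) = (jj == o + k)%N by lia.
case: ifP => // _.
have -> : ((jj - o)%N == k.+1) = (jj == o + k.+1)%N by lia.
case: (jj =P (o + k.+1)%N) => //= e; case: ltnP => //; lia.
Qed.

Lemma chain_row ws j as_ l m n k : all atomic_wf ws -> (j < size ws)%N ->
  nth (Fermat 2) ws j = Chain as_ -> (k < size as_)%N ->
  (nth 0%N as_ k)%:R * bvec ws l m n (nvars (take j ws) + k) +
  (if (k.+1 < size as_)%N then bvec ws l m n (nvars (take j ws) + k.+1) else 0) =
  (l (nvars (take j ws) + k) + m (nvars (take j ws) + k) + n (nvars (take j ws) + k) + 2)%N%:R.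
Proof.
move=> hwf hj hn hk.
have hnv := nvars_take hj; rewrite hn /= in hnv.
rewrite -(bvec_row l m n hwf (_ : (nvars (take j ws) + k < nvars ws)%N)); last by lia.
under eq_bigr => jj _ do rewrite (Eent_chain_pt jj hj hn hk).
set o := nvars (take j ws).
have -> : \sum_(jj < nvars ws) (if (jj:nat) == (o + k)%N then nth 0%N as_ k
       else if ((jj:nat) == (o + k.+1)%N) && (k.+1 < size as_)%N then 1%N else 0%N)%:R
       * bvec ws l m n jj =
  \sum_(jj < nvars ws) ((jj == (o + k)%N :> nat)%:R * ((nth 0%N as_ k)%:R * bvec ws l m n jj)) +
  \sum_(jj < nvars ws) ((jj == (o + k.+1)%N :> nat)%:R * ((k.+1 < size as_)%N%:R * bvec ws l m n jj)).
  rewrite -big_split; apply: eq_bigr => jj _ /=.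
  case: (eqVneq (jj : nat) (o + k)%N) => e1.
    have -> : (jj == (o + k.+1)%N :> nat) = false by rewrite e1; lia.
    by rewrite /= mul1r mul0r addr0.
  case: ((jj : nat) =P (o + k.+1)%N) => e2; case: ltnP => e3 /=;
    rewrite ?mul0r ?mul1r ?add0r //.
rewrite (sum_pick _ _ (fun x => (nth 0%N as_ k)%:R * bvec ws l m n x)) (sum_pick _ _ (fun x => (k.+1 < size as_)%N%:R * bvec ws l m n x)) /=.
rewrite (_ : (o + k < nvars ws)%N); last by lia.
case: ltnP => e3; last by rewrite mul0r if_same.
by rewrite (_ : (o + k.+1 < nvars ws)%N) ?mul1r //; lia.
Qed.

Lemma std_loc ws r j : in_std_basis ws r -> (j < size ws)%N ->
  loc_basis (nth (Fermat 2) ws j) (fun i => r (i + nvars (take j ws))%N).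
Proof.
elim: ws r j => [|B ws IH] r [|j] //= /andP [h1 h2] hj.
  have -> : (fun i => r (i + nvars [::])%N) = r.
    by apply: functional_extensionality => i; rewrite /nvars /= addn0.
  exact: h1.
have := IH _ j h2 hj.
have -> : (fun i => r (i + nvars (B :: take j ws))%N) =
          (fun i => r (i + nvars (take j ws) + asize B)%N).
  by apply: functional_extensionality => i; rewrite nvars_cons; congr r; lia.
by [].
Qed.

Lemma all_nth_at (T : Type) (p : pred T) x0 (s : seq T) i :
  all p s -> (i < size s)%N -> p (nth x0 s i).
Proof.
elim: s i => [|x s IH] [|i] //=; first by case/andP.
by case/andP => _ h2 hi; apply: IH.
Qed.

Lemma intr_posz (k : nat) : ((k%:Z)%:~R : rat) = k%:R.
Proof. by []. Qed.

Theorem lemma6p13 (ws : seq atomic) (j : nat) (as_ : seq nat) (l m n : nat -> nat) :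
  all atomic_wf ws ->
  nth (Fermat 2) ws j = Chain as_ ->
  (j < size ws)%N ->
  type_Xm1 ws l m n ->
  let o := nvars (take j ws) in
  let N := size as_ in
  \sum_(k < N) Kvec ws l m n (o + k) = 1 ->
  Kvec ws l m n (o + N.-1) <= (l (o + N.-1)%N)%:R /\
  (0 <= Kvec ws l m n (o + N.-1) ->
   K_shape [seq Kvec ws l m n (o + k) | k <- iota 0 N]).
Proof.
move=> hwf hnth hj hX o N hsum.
case: hX => _ hm hn hint _.
have hA : atomic_wf (Chain as_) by rewrite -hnth; apply: all_nth_at.
case/andP: hA => hN0 hall.
have hnv := nvars_take hj; rewrite hnth /= in hnv.
have hbd : forall r, in_std_basis ws r -> forall k, (k < N)%N -> (r (o + k)%N <= (nth 0%N as_ k).-1)%N.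
  move=> r hr k hk; have := std_loc hr hj; rewrite hnth /= => /andP [/allP h _].
  by have := h k; rewrite mem_iota add0n addnC; apply.
have ha : forall k, (k < N)%N -> (2 <= nth 0%N as_ k)%N.
  by move=> k hk; apply: (all_nth_at _ hall).
pose zf k := numq (Kvec ws l m n (o + k)).
have hz : forall k, (k < N)%N -> Kvec ws l m n (o + k) = (zf k)%:~R.
  move=> k hk; have [z hz] := hint (o + k)%N ltac:(lia).
  by rewrite /zf hz numq_int.
pose b k := (l (o + k)%N)%:Z + 1 - zf k.
have hb : forall k, (k < N)%N -> bvec ws l m n (o + k) = (b k)%:~R.
  move=> k hk; have := hz k hk; rewrite /Kvec /b => e.
  rewrite !rmorphB !rmorphD /= intr_posz -e; ring.
pose a k := (nth 0%N as_ k)%:Z.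
pose ll k := (l (o + k)%N)%:Z.
pose s k := (m (o + k)%N + n (o + k)%N)%:Z.
have hk : forall k, (k < N)%N -> 2 <= a k /\ 0 <= ll k /\ 0 <= s k /\
   s k <= 2 * a k - 2 /\ a k * b k + BB N b k.+1 = ll k + s k + 2.
  move=> k hkk.
  have h1 := hbd m hm k hkk; have h2 := hbd n hn k hkk; have h3 := ha k hkk.
  do 4?split; rewrite /a /s /ll; try lia.
  have := chain_row l m n hwf hj hnth hkk; rewrite -/o -/N.
  rewrite hb // /BB; case: ifP => hk1.
    rewrite hb // => e.
    have e' : ((a k * b k + b k.+1)%:~R : rat) = ((l (o+k) + m (o+k) + n (o+k) + 2)%N%:Z)%:~R.
      by rewrite rmorphD rmorphM /= /a !intr_posz e.
    move/eqP: e'; rewrite eqr_int => /eqP ->; rewrite /ll /s; lia.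
  rewrite addr0 => e.
  have e' : ((a k * b k)%:~R : rat) = ((l (o+k) + m (o+k) + n (o+k) + 2)%N%:Z)%:~R.
    by rewrite rmorphM /= /a !intr_posz e.
  move/eqP: e'; rewrite eqr_int => /eqP ->; rewrite /ll /s; lia.
have hN : (0 < N)%N by [].
have hKf : forall k, (k < N)%N -> Kf ll b k = zf k.
  by move=> k hk0; rewrite /Kf /ll /b; ring.
have hsumi : \sum_(k < N) Kf ll b k = 1.
  apply/eqP; rewrite -(eqr_int rat); apply/eqP.
  rewrite rmorph_sum rmorph1 /= -[RHS]hsum; apply: eq_bigr => k _.
  by rewrite (hKf _ (ltn_ord k)) (hz _ (ltn_ord k)).
have hlastN : (N.-1 < N)%N by rewrite prednK.
have [h1 [h2 [h3 [h4 h5]]]] := hk _ hlastN.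
rewrite hz //; split.
  rewrite -intr_posz ler_int.
  move: h5; rewrite /BB prednK // ltnn addr0 => h5.
  have : 1 <= b N.-1 by nia.
  rewrite /b /ll; lia.
rewrite ler0z => hl.
have hl' : 0 <= Kf ll b N.-1 by rewrite hKf.
have := main_int hN hk hsumi hl'.
move/(proj1 (dfa_A _)).
congr K_shape; rewrite -map_comp; apply/eq_in_map => k; rewrite mem_iota add0n => hkN /=.
by rewrite hKf // hz.
Qed.
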